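(* Let $M=\langle S,A,P,R,s_\iota,\gamma\rangle$ be an MDP, $s^*_1,s^*_2\in S$, let $\mathcal{M}$ be the bisimulation metric RMDP constructed from $M$ and $s^*_1,s^*_2$, and let $d^*$ be the bisimulation metric of $M$ (see context). Then the optimal robust value function of $\mathcal{M}$ coincides with $d^*$, i.e. $\underline{V}^*_{\mathcal{M}}=d^*$, and in particular $\underline{V}^*_{\mathcal{M}}(s^*_1,s^*_2)=d^*(s^*_1,s^*_2)$.
   Context: An MDP $M=\langle S,A,P,R,s_\iota,\gamma\rangle$ has finite states $S$, finite actions $A$, transition function $P\colon S\times A\to\mathcal{D}(S)$, rewards $R\colon S\times A\to\mathbb{R}$, initial state $s_\iota$, discount $\gamma\in(0,1)$. A pseudometric on $S$ is $d\colon S\times S\to[0,\infty)$ with $d(x,x)=0$, symmetry and the triangle inequality; $\mathfrak{M}_S$ is the set of pseudometrics on $S$, ordered pointwise. For distributions $\mu,\nu$ on $S$, the set of couplings $\Lambda_{\mu,\nu}$ consists of $\vec\lambda\in\mathbb{R}_{\ge0}^{S\times S}$ with $\sum_{t'}\vec\lambda(t,t')=\mu(t)$, $\sum_t\vec\lambda(t,t')=\nu(t')$; the Kantorovich distance w.r.t. $d$ is $\mathfrak{D}_K(d)(\mu,\nu)=\min_{\vec\lambda\in\Lambda_{\mu,\nu}}\sum_{t,t'}\vec\lambda(t,t')d(t,t')$. Define $\mathfrak{F}_K\colon\mathfrak{M}_S\to\mathfrak{M}_S$ by $\mathfrak{F}_K(d)(s_1,s_2)=\max_{a\in A}(1-\gamma)|R(s_1,a)-R(s_2,a)|+\gamma\,\mathfrak{D}_K(d)(P(s_1,a),P(s_2,a))$;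 the bisimulation metric $d^*$ is the least fixed point of $\mathfrak{F}_K$. The bisimulation metric RMDP is $\mathcal{M}=\langle S\times S,A,\mathcal{U},\mathcal{R},\langle s^*_1,s^*_2\rangle,\gamma\rangle$, an $(s,a)$-rectangular RMDP with state space $S\times S$, uncertainty set $\mathcal{U}=\prod_{((s,s'),a)}\mathcal{U}_{((s,s'),a)}$ with $\mathcal{U}_{((s,s'),a)}=\Lambda_{P(s,a),P(s',a)}$ (a coupling is used as the distribution over successor pairs $(t,t')$), and reward $\mathcal{R}(\langle s,s'\rangle,a)=(1-\gamma)|R(s,a)-R(s',a)|$. For such an RMDP, the robust value of a policy $\pi$ from state $q$ is $\underline{V}^\pi(q)=\inf_{\vec u\in\mathcal{U}}\mathbb{E}_{\pi,P_{\vec u}}[\sum_{t\ge0}\gamma^t\mathcal{R}(q_t,a_t)\mid q_0=q]$ and $\underline{V}^*_{\mathcal{M}}(q)=\sup_\pi\underline{V}^\pi(q)$ over all policies. *)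

(* Defs.v *)
From HB Require Import structures.
From mathcomp Require Import all_boot all_order all_algebra.
From mathcomp Require Import all_classical all_reals all_analysis.
Set Implicit Arguments. Unset Strict Implicit. Unset Printing Implicit Defensive.
Import Order.TTheory GRing.Theory Num.Theory numFieldNormedType.Exports.
Local Open Scope classical_set_scope.
Local Open Scope ring_scope.

Section Bisim.
Variable R : realType.

Definition is_dist (T : finType) (mu : {ffun T -> R}) : Prop :=
  (forall t, 0 <= mu t) /\ \sum_(t : T) mu t = 1.

Definition is_pseudometric (S : finType) (d : S -> S -> R) : Prop :=
  (forall x y, 0 <= d x y) /\ (forall x, d x x = 0) /\
  (forall x y, d x y = d y x) /\ (forall x y z, d x z <= d x y + d y z).

Definition is_coupling (S : finType) (mu nu : {ffun S -> R})
    (lam : {ffun (S * S)%type -> R}) : Prop :=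
  (forall p, 0 <= lam p) /\
  (forall t, \sum_(t' : S) lam (t, t') = mu t) /\
  (forall t', \sum_(t : S) lam (t, t') = nu t').

Definition coupling_cost (S : finType) (d : S -> S -> R)
    (lam : {ffun (S * S)%type -> R}) : R :=
  \sum_(p : (S * S)%type) lam p * d p.1 p.2.

(* D_K(d)(mu,nu) = min over couplings (the min is attained; written as inf) *)
Definition kantorovich (S : finType) (d : S -> S -> R) (mu nu : {ffun S -> R}) : R :=
  inf [set c | exists lam, is_coupling mu nu lam /\ c = coupling_cost d lam].

Definition FK (S A : finType) (P : S -> A -> {ffun S -> R}) (Rw : S -> A -> R)
    (gamma : R) (d : S -> S -> R) : S -> S -> R :=
  fun s1 s2 => \big[Num.max/0]_(a : A)
     ((1 - gamma) * `|Rw s1 a - Rw s2 a| + gamma * kantorovich d (P s1 a) (P s2 a)).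

Definition is_bisim_metric (S A : finType) (P : S -> A -> {ffun S -> R})
    (Rw : S -> A -> R) (gamma : R) (d : S -> S -> R) : Prop :=
  is_pseudometric d /\ FK P Rw gamma d = d /\
  (forall d', is_pseudometric d' -> FK P Rw gamma d' = d' ->
     forall x y, d x y <= d' x y).

(* A general (history-dependent, randomised) policy: a distribution over actions
   given the history of past (state, action) pairs and the current state. *)
Definition policy (Q A : finType) := seq (Q * A) -> Q -> {ffun A -> R}.

Definition is_policy (Q A : finType) (pi : policy Q A) : Prop :=
  forall h q, is_dist (pi h q).

(* Expected discounted reward accumulated over the first n steps, from
   history h and current state q, under policy pi and transition function T:
   E[ sum_{t<n} gamma^t r(q_t,a_t) ] written out as nested finite sums. *)
Fixpoint horizon_value (Q A : finType) (T : Q -> A -> {ffun Q -> R})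
    (r : Q -> A -> R) (gamma : R) (pi : policy Q A) (n : nat)
    (h : seq (Q * A)) (q : Q) : R :=
  match n with
  | 0 => 0
  | n'.+1 => \sum_(a : A) pi h q a *
        (r q a + gamma * \sum_(q' : Q) T q a q' *
                 horizon_value T r gamma pi n' (rcons h (q, a)) q')
  end.

Definition disc_value (Q A : finType) (T : Q -> A -> {ffun Q -> R})
    (r : Q -> A -> R) (gamma : R) (pi : policy Q A) (q : Q) : R :=
  limn (fun n => horizon_value T r gamma pi n [::] q).

Definition bisim_reward (S A : finType) (Rw : S -> A -> R) (gamma : R)
    (q : (S * S)%type) (a : A) : R :=
  (1 - gamma) * `|Rw q.1 a - Rw q.2 a|.

(* u is an element of the (s,a)-rectangular uncertainty set U: for each
   ((s,s'),a), u ((s,s'),a) is a coupling of P(s,a) and P(s',a), used as the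
   distribution over successor pairs (t,t'). *)
Definition in_bisim_uncertainty (S A : finType) (P : S -> A -> {ffun S -> R})
    (u : (S * S)%type -> A -> {ffun (S * S)%type -> R}) : Prop :=
  forall q a, is_coupling (P q.1 a) (P q.2 a) (u q a).

Definition bisim_robust_value (S A : finType) (P : S -> A -> {ffun S -> R})
    (Rw : S -> A -> R) (gamma : R) (pi : policy (S * S)%type A)
    (q : (S * S)%type) : R :=
  inf [set v | exists u, in_bisim_uncertainty P u /\
                 v = disc_value u (bisim_reward Rw gamma) gamma pi q].

Definition bisim_opt_robust_value (S A : finType) (P : S -> A -> {ffun S -> R})
    (Rw : S -> A -> R) (gamma : R) (q : (S * S)%type) : R :=
  sup [set v | exists pi, is_policy pi /\ v = bisim_robust_value P Rw gamma pi q].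

End Bisim.

(* Main.v *)
Set Warnings "-all".
Require Import Defs.
From HB Require Import structures.
From mathcomp Require Import all_boot all_order all_algebra.
From mathcomp Require Import all_classical all_reals all_analysis.
From mathcomp Require Import ring lra.
Import Order.TTheory GRing.Theory Num.Theory.
Set Implicit Arguments. Unset Strict Implicit. Unset Printing Implicit Defensive.
Local Open Scope ring_scope.

Section Aux.
Variable R : realType.

Lemma single_le_sum (I : finType) (F : I -> R) j :
  (forall i, 0 <= F i) -> F j <= \sum_i F i.
Proof.
move=> h; rewrite (bigD1 j) //= lerDl sumr_ge0 // => i _; exact: h.
Qed.

Lemma sum_pair (S : finType) (F : (S * S)%type -> R) :
  \sum_p F p = \sum_t \sum_t' F (t, t').
Proof. by rewrite pair_bigA; apply: eq_bigr => -[]. Qed.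

Lemma coupling_sum1 (S : finType) (mu nu : {ffun S -> R}) (lam : {ffun (S * S)%type -> R}) :
  is_dist mu -> is_coupling mu nu lam -> \sum_p lam p = 1.
Proof.
move=> [_ hmu] [_ [h1 _]]; rewrite sum_pair -hmu; apply: eq_bigr => t _; exact: h1.
Qed.

Lemma coupling_exists (S : finType) (mu nu : {ffun S -> R}) :
  is_dist mu -> is_dist nu -> is_coupling mu nu [ffun p => mu p.1 * nu p.2].
Proof.
move=> [hm0 hm1] [hn0 hn1]; split; [|split].
- move=> p; rewrite ffunE mulr_ge0 //.
- move=> t; under eq_bigr do rewrite ffunE /=.
  by rewrite -mulr_sumr hn1 mulr1.
- move=> t'; under eq_bigr do rewrite ffunE /=.
  by rewrite -mulr_suml hm1 mul1r.
Qed.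

Definition nonneg (S : finType) (d : S -> S -> R) := forall x y, 0 <= d x y.

Definition Kset (S : finType) (d : S -> S -> R) (mu nu : {ffun S -> R}) :=
  [set c | exists lam, is_coupling mu nu lam /\ c = coupling_cost d lam]%classic.

Lemma cost_ge0 (S : finType) (d : S -> S -> R) (lam : {ffun (S * S)%type -> R}) :
  nonneg d -> (forall p, 0 <= lam p) -> 0 <= coupling_cost d lam.
Proof. by move=> hd hl; apply: sumr_ge0 => p _; rewrite mulr_ge0. Qed.

Lemma Kset_lb (S : finType) (d : S -> S -> R) mu nu :
  nonneg d -> lbound (Kset d mu nu) 0.
Proof. by move=> hd c [lam [[hl _] ->]]; exact: cost_ge0. Qed.

Lemma Kset_ne (S : finType) (d : S -> S -> R) mu nu :
  is_dist mu -> is_dist nu -> (Kset d mu nu !=set0)%classic.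
Proof. by move=> hm hn; eexists; exists [ffun p => mu p.1 * nu p.2]; split; first exact: coupling_exists. Qed.

Lemma K_le_cost (S : finType) (d : S -> S -> R) mu nu (lam : {ffun (S * S)%type -> R}) :
  nonneg d -> is_coupling mu nu lam -> kantorovich d mu nu <= coupling_cost d lam.
Proof.
move=> hd hl; apply: ge_inf; first by exists 0; exact: Kset_lb.
by exists lam.
Qed.

Lemma K_ge0 (S : finType) (d : S -> S -> R) mu nu :
  nonneg d -> is_dist mu -> is_dist nu -> 0 <= kantorovich d mu nu.
Proof. by move=> hd hm hn; apply: lb_le_inf; [exact: Kset_ne | exact: Kset_lb]. Qed.

Lemma K_approx (S : finType) (d : S -> S -> R) mu nu eps :
  nonneg d -> is_dist mu -> is_dist nu -> 0 < eps ->
  exists lam, is_coupling mu nu lam /\ coupling_cost d lam < kantorovich d mu nu + eps.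
Proof.
move=> hd hm hn he.
have [c [lam [hl ->]] hc] := inf_adherent he (conj (@Kset_ne _ d _ _ hm hn) (ex_intro _ 0 (Kset_lb (mu:=mu) (nu:=nu) hd))).
by exists lam.
Qed.

Lemma K_mono (S : finType) (d d' : S -> S -> R) mu nu :
  nonneg d -> (forall x y, d x y <= d' x y) -> is_dist mu -> is_dist nu ->
  kantorovich d mu nu <= kantorovich d' mu nu.
Proof.
move=> hd hdd hm hn; apply: lb_le_inf; first exact: Kset_ne.
move=> c [lam [hl ->]]; apply: (le_trans (K_le_cost hd hl)).
apply: ler_sum => p _; apply: ler_wpM2l; first by case: hl.
exact: hdd.
Qed.

Lemma K_le_bound (S : finType) (d : S -> S -> R) C mu nu :
  nonneg d -> (forall x y, d x y <= C) -> is_dist mu -> is_dist nu ->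
  kantorovich d mu nu <= C.
Proof.
move=> hd hC hm hn.
have hl := coupling_exists hm hn.
apply: (le_trans (K_le_cost hd hl)).
rewrite -[C]mul1r -(coupling_sum1 hm hl) mulr_suml.
apply: ler_sum => p _; apply: ler_wpM2l; first by case: hl.
exact: hC.
Qed.

Lemma K_diag (S : finType) (d : S -> S -> R) mu :
  nonneg d -> (forall x, d x x = 0) -> is_dist mu -> kantorovich d mu mu = 0.
Proof.
move=> hd h0 hm; apply/le_anti; rewrite K_ge0 // andbT.
pose lam := [ffun p : (S * S)%type => if p.1 == p.2 then mu p.1 else 0].
have hl : is_coupling mu mu lam.
  split; [|split].
  - move=> p; rewrite ffunE; case: ifP => // _; by case: hm.
  - move=> t; rewrite (bigD1 t) //= ffunE eqxx /= big1 ?addr0 // => t' ht'.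
    by rewrite ffunE /= eq_sym (negbTE ht').
  - move=> t; rewrite (bigD1 t) //= ffunE eqxx /= big1 ?addr0 // => t' ht'.
    by rewrite ffunE /= (negbTE ht').
apply: (le_trans (K_le_cost hd hl)); rewrite le_eqVlt; apply/orP; left; apply/eqP.
apply: big1 => -[x y] _; rewrite ffunE /=; case: eqP => [->|_]; first by rewrite h0 mulr0.
by rewrite mul0r.
Qed.

Lemma K_sym_le (S : finType) (d : S -> S -> R) mu nu :
  nonneg d -> (forall x y, d x y = d y x) -> is_dist mu -> is_dist nu ->
  kantorovich d mu nu <= kantorovich d nu mu.
Proof.
move=> hd hs hm hn; apply: lb_le_inf; first exact: Kset_ne.
move=> c [lam [[hl0 [hl1 hl2]] ->]].
pose lamT := [ffun p : (S * S)%type => lam (p.2, p.1)].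
have hT : is_coupling mu nu lamT.
  split; [|split].
  - by move=> p; rewrite ffunE.
  - by move=> t; under eq_bigr do rewrite ffunE /=; rewrite hl2.
  - by move=> t; under eq_bigr do rewrite ffunE /=; rewrite hl1.
apply: (le_trans (K_le_cost hd hT)); rewrite le_eqVlt; apply/orP; left; apply/eqP.
rewrite /coupling_cost !sum_pair exchange_big /=; apply: eq_bigr => x _; apply: eq_bigr => y _.
by rewrite ffunE /= hs.
Qed.

End Aux.

Section Glue.
Variable R : realType.

Lemma glue (S : finType) (d : S -> S -> R) (mu nu rho : {ffun S -> R})
  (l1 l2 : {ffun (S * S)%type -> R}) :
  nonneg d -> (forall x y z, d x z <= d x y + d y z) ->
  is_coupling mu nu l1 -> is_coupling nu rho l2 ->
  exists lam, is_coupling mu rho lam /\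
    coupling_cost d lam <= coupling_cost d l1 + coupling_cost d l2.
Proof.
move=> hd ht [p1 [m1 m2]] [q1 [n1 n2]].
have nu0 y : 0 <= nu y by rewrite -(m2 y) sumr_ge0.
have F1 x y : l1 (x,y) / nu y * nu y = l1 (x,y).
  have [e0|nz] := eqVneq (nu y) 0; last by rewrite divfK.
  have h := @single_le_sum R S (fun x => l1 (x,y)) x (fun i => p1 _).
  rewrite /= m2 e0 in h.
  have -> : l1 (x, y) = 0 by apply/le_anti; rewrite h p1.
  by rewrite !mul0r.
have F2 y z : l2 (y,z) / nu y * nu y = l2 (y,z).
  have [e0|nz] := eqVneq (nu y) 0; last by rewrite divfK.
  have h := @single_le_sum R S (fun z => l2 (y,z)) z (fun i => q1 _).
  rewrite /= n1 e0 in h.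
  have -> : l2 (y, z) = 0 by apply/le_anti; rewrite h q1.
  by rewrite !mul0r.
have w0 x y z : 0 <= l1 (x,y) * l2 (y,z) / nu y.
  by rewrite divr_ge0 ?mulr_ge0.
pose lam := [ffun p : (S * S)%type => \sum_y l1 (p.1,y) * l2 (y,p.2) / nu y].
exists lam; split; first split; [|split|].
- by move=> p; rewrite ffunE sumr_ge0.
- move=> x; under eq_bigr do rewrite ffunE /=.
  rewrite exchange_big /= -(m1 x); apply: eq_bigr => y _.
  transitivity (l1 (x,y) / nu y * \sum_z l2 (y,z)).
    by rewrite mulr_sumr; apply: eq_bigr => z _; rewrite mulrAC.
  by rewrite n1 F1.
- move=> z; under eq_bigr do rewrite ffunE /=.
  rewrite exchange_big /= -(n2 z); apply: eq_bigr => y _.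
  transitivity ((\sum_x l1 (x,y)) * (l2 (y,z) / nu y)).
    by rewrite mulr_suml; apply: eq_bigr => x _; rewrite mulrA.
  by rewrite m2 mulrC F2.
have E1 : \sum_x \sum_z \sum_y l1 (x,y) * l2 (y,z) / nu y * d x y = coupling_cost d l1.
  rewrite /coupling_cost sum_pair; apply: eq_bigr => x _; rewrite exchange_big; apply: eq_bigr => y _ /=.
  transitivity (l1 (x,y) / nu y * (\sum_z l2 (y,z)) * d x y).
    by rewrite mulr_sumr mulr_suml; apply: eq_bigr => z _; ring.
  by rewrite n1 F1.
have E2 : \sum_x \sum_z \sum_y l1 (x,y) * l2 (y,z) / nu y * d y z = coupling_cost d l2.
  rewrite /coupling_cost sum_pair exchange_big /=.
  under eq_bigr => z _ do rewrite exchange_big.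
  rewrite exchange_big /=; apply: eq_bigr => y _; apply: eq_bigr => z _.
  transitivity ((\sum_x l1 (x,y)) * (l2 (y,z) / nu y) * d y z).
    by rewrite !mulr_suml; apply: eq_bigr => x _; ring.
  by rewrite m2 (mulrC (nu y)) F2.
rewrite -E1 -E2 /coupling_cost sum_pair -big_split /=; apply: ler_sum => x _.
rewrite -big_split /=; apply: ler_sum => z _.
rewrite ffunE /= mulr_suml -big_split /=; apply: ler_sum => y _.
by rewrite -mulrDr ler_wpM2l.
Qed.

Lemma K_tri (S : finType) (d : S -> S -> R) (mu nu rho : {ffun S -> R}) :
  nonneg d -> (forall x y z, d x z <= d x y + d y z) ->
  is_dist mu -> is_dist nu -> is_dist rho ->
  kantorovich d mu rho <= kantorovich d mu nu + kantorovich d nu rho.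
Proof.
move=> hd ht hm hn hr; apply/ler_addgt0Pr => e he.
have he2 : 0 < e / 2 by rewrite divr_gt0.
have [l1 [h1 c1]] := K_approx hd hm hn he2.
have [l2 [h2 c2]] := K_approx hd hn hr he2.
have [lam [hl hc]] := glue hd ht h1 h2.
apply: (le_trans (K_le_cost hd hl)); apply: (le_trans hc).
have -> : kantorovich d mu nu + kantorovich d nu rho + e =
  (kantorovich d mu nu + e / 2) + (kantorovich d nu rho + e / 2) by field.
by apply: lerD; apply: ltW.
Qed.

End Glue.

Section FKsec.
Variables (R : realType) (S A : finType) (P : S -> A -> {ffun S -> R})
  (Rw : S -> A -> R) (gamma : R).
Hypothesis hP : forall s a, is_dist (P s a).
Hypothesis hgamma : 0 < gamma < 1.

Let g0 : 0 <= gamma. Proof. by case/andP: hgamma => /ltW. Qed.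
Let g1 : 0 <= 1 - gamma. Proof. by case/andP: hgamma => _ h; rewrite subr_ge0 ltW. Qed.

Definition term (d : S -> S -> R) x y a :=
  (1 - gamma) * `|Rw x a - Rw y a| + gamma * kantorovich d (P x a) (P y a).

Lemma FKE d x y : FK P Rw gamma d x y = \big[Num.max/0]_a term d x y a.
Proof. by []. Qed.

Lemma FK_ge0 d x y : 0 <= FK P Rw gamma d x y.
Proof. by rewrite FKE; exact: bigmax_ge_id. Qed.

Lemma term_le_FK d x y a : term d x y a <= FK P Rw gamma d x y.
Proof. by rewrite FKE; exact: le_bigmax. Qed.

Lemma term_ge0 (d : S -> S -> R) x y a : nonneg d -> 0 <= term d x y a.
Proof. by move=> hd; rewrite addr_ge0 ?mulr_ge0 ?K_ge0. Qed.

Lemma FK_mono (d d' : S -> S -> R) x y : nonneg d -> (forall x y, d x y <= d' x y) ->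
  FK P Rw gamma d x y <= FK P Rw gamma d' x y.
Proof.
move=> hd hdd; rewrite !FKE; apply: le_bigmax2 => a _.
by rewrite lerD2l ler_wpM2l // K_mono.
Qed.

Definition Cb := \sum_(x : S) \sum_(y : S) \sum_(a : A) `|Rw x a - Rw y a|.

Lemma Cb_ge : forall x y a, `|Rw x a - Rw y a| <= Cb.
Proof.
move=> x y a; rewrite /Cb.
apply: le_trans (@single_le_sum R S (fun x => \sum_y \sum_a `|Rw x a - Rw y a|) x _); last first.
  by move=> i; do 2!(apply: sumr_ge0 => ? _).
apply: le_trans (@single_le_sum R S (fun y => \sum_a `|Rw x a - Rw y a|) y _); last first.
  by move=> i; apply: sumr_ge0 => ? _.
exact: (@single_le_sum R A (fun a => `|Rw x a - Rw y a|) a).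
Qed.

Lemma Cb_ge0 : 0 <= Cb.
Proof. by do 3!(apply: sumr_ge0 => ? _). Qed.

Lemma FK_bound d x y : nonneg d -> (forall x y, d x y <= Cb) ->
  FK P Rw gamma d x y <= Cb.
Proof.
move=> hd hC; rewrite FKE; apply: bigmax_le; first exact: Cb_ge0.
move=> a _; rewrite /term.
have h1 := Cb_ge x y a.
have h2 : kantorovich d (P x a) (P y a) <= Cb by apply: K_le_bound.
have -> : Cb = (1 - gamma) * Cb + gamma * Cb by ring.
by apply: lerD; apply: ler_wpM2l.
Qed.

Lemma K_symm (d : S -> S -> R) (mu nu : {ffun S -> R}) : nonneg d -> (forall x y, d x y = d y x) -> is_dist mu -> is_dist nu ->
  kantorovich d mu nu = kantorovich d nu mu.
Proof. by move=> *; apply/le_anti; rewrite !K_sym_le. Qed.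

Lemma FK_pm d : is_pseudometric d -> is_pseudometric (FK P Rw gamma d).
Proof.
move=> [hd [hdiag [hsym htri]]]; split; [|split; [|split]].
- exact: FK_ge0.
- move=> x; apply/le_anti; rewrite FK_ge0 andbT FKE; apply: bigmax_le => // a _.
  by rewrite /term subrr normr0 mulr0 add0r K_diag // mulr0.
- move=> x y; rewrite !FKE; apply: eq_bigr => a _.
  by rewrite /term distrC K_symm.
- move=> x y z; rewrite [X in X <= _]FKE; apply: bigmax_le.
    by rewrite addr_ge0 ?FK_ge0.
  move=> a _; apply: le_trans (lerD (term_le_FK d x y a) (term_le_FK d y z a)).
  rewrite /term addrACA -mulrDr -mulrDr; apply: lerD; apply: ler_wpM2l => //.
    exact: ler_distD.
  exact: K_tri.
Qed.

(* Tarski-style construction of a pseudometric fixed point *)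
Definition good (d : S -> S -> R) :=
  is_pseudometric d /\ (forall x y, d x y <= Cb) /\ (forall x y, d x y <= FK P Rw gamma d x y).

Definition gset x y := [set v | exists d, good d /\ v = d x y]%classic.

Definition dstar x y := sup (gset x y).

Lemma good0 : good (fun _ _ => 0).
Proof.
split; [|split].
- split; [by []|split; [by []|split; [by []|by move=> *; rewrite addr0]]].
- by move=> *; exact: Cb_ge0.
- by move=> *; exact: FK_ge0.
Qed.

Lemma gset_ne x y : (gset x y !=set0)%classic.
Proof. by exists 0, (fun _ _ => 0); split; [exact: good0|]. Qed.

Lemma gset_ub x y : ubound (gset x y) Cb.
Proof. by move=> v [d [[_ [hC _]] ->]]. Qed.

Lemma le_dstar d x y : good d -> d x y <= dstar x y.
Proof.
move=> hg; apply: ub_le_sup; first by exists Cb; exact: gset_ub.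
by exists d.
Qed.

Lemma dstar_le x y c : (forall d, good d -> d x y <= c) -> dstar x y <= c.
Proof. by move=> h; apply: ge_sup; [exact: gset_ne| move=> v [d [hg ->]]; exact: h]. Qed.

Lemma dstar_nonneg : nonneg dstar.
Proof. by move=> x y; apply: (le_dstar x y good0). Qed.

Lemma dstar_pm : is_pseudometric dstar.
Proof.
split; [exact: dstar_nonneg|split; [|split]].
- move=> x; apply/le_anti; rewrite dstar_nonneg andbT; apply: dstar_le.
  by move=> d [[_ [h _]] _]; rewrite h.
- move=> x y; apply/le_anti; apply/andP; split; apply: dstar_le => d hg;
   have [[_ [_ [hs _]]] _] := hg; rewrite hs; exact: le_dstar.
- move=> x y z; apply: dstar_le => d hg; have [[_ [_ [_ ht]]] _] := hg.
  by apply: le_trans (ht x y z) _; apply: lerD; apply: le_dstar.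
Qed.

Lemma dstar_Cb x y : dstar x y <= Cb.
Proof. by apply: dstar_le => d [_ [h _]]. Qed.

Lemma dstar_post x y : dstar x y <= FK P Rw gamma dstar x y.
Proof.
apply: dstar_le => d hg; have [[hd _] [_ hpost]] := hg.
apply: le_trans (hpost x y) _; apply: FK_mono => // u v; exact: le_dstar.
Qed.

Lemma dstar_fix : FK P Rw gamma dstar = dstar.
Proof.
apply/funext => x; apply/funext => y; apply/le_anti; rewrite dstar_post andbT.
apply: le_dstar; split; [exact: FK_pm dstar_pm|split].
- by move=> u v; apply: FK_bound; [exact: dstar_nonneg| exact: dstar_Cb].
- move=> u v; apply: FK_mono; first exact: dstar_nonneg.
  exact: dstar_post.
Qed.

End FKsec.

Import numFieldNormedType.Exports.
Local Open Scope classical_set_scope.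

Section Hor.
Variables (R : realType) (Q A : finType) (T : Q -> A -> {ffun Q -> R})
  (r : Q -> A -> R) (gamma : R) (pi : policy R Q A).
Hypothesis hT0 : forall q a q', 0 <= T q a q'.
Hypothesis hT1 : forall q a, \sum_q' T q a q' = 1.
Hypothesis hpi : is_policy pi.
Hypothesis hr0 : forall q a, 0 <= r q a.
Hypothesis hgamma : 0 < gamma < 1.

Let g0 : 0 <= gamma. Proof. by case/andP: hgamma => /ltW. Qed.
Let g1 : 0 < 1 - gamma. Proof. by case/andP: hgamma => _ h; rewrite subr_gt0. Qed.

Local Notation hv := (horizon_value T r gamma pi).

Lemma hvS n h q : hv n.+1 h q =
  \sum_(a : A) pi h q a * (r q a + gamma * \sum_(q' : Q) T q a q' * hv n (rcons h (q, a)) q').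
Proof. by []. Qed.

Lemma pi0 h q a : 0 <= pi h q a.
Proof. by case: (hpi h q) => ? _. Qed.

Lemma hv_ge0 n h q : 0 <= hv n h q.
Proof.
elim: n h q => [//|n IH] h q; rewrite hvS.
apply: sumr_ge0 => a _; rewrite mulr_ge0 ?pi0 // addr_ge0 ?hr0 // mulr_ge0 //.
by apply: sumr_ge0 => q' _; rewrite mulr_ge0.
Qed.

Lemma hv_mono n h q : hv n h q <= hv n.+1 h q.
Proof.
elim: n h q => [|n IH] h q; first exact: hv_ge0.
rewrite (hvS n.+1) (hvS n); apply: ler_sum => a _; rewrite ler_wpM2l ?pi0 //.
rewrite lerD2l ler_wpM2l //; apply: ler_sum => q' _; rewrite ler_wpM2l //.
Qed.

Definition rb := \sum_q \sum_a r q a.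

Lemma r_le_rb q a : r q a <= rb.
Proof.
apply: le_trans (@single_le_sum R Q (fun q => \sum_a r q a) q _); last first.
  by move=> i; apply: sumr_ge0 => ? _.
exact: (@single_le_sum R A (fun a => r q a) a).
Qed.

Lemma hv_bound n h q : hv n h q <= rb / (1 - gamma).
Proof.
have rb0 : 0 <= rb by apply: sumr_ge0 => ? _; apply: sumr_ge0 => ? _; exact: hr0.
elim: n h q => [|n IH] h q.
  by rewrite /= divr_ge0 // ltW.
rewrite hvS; apply: le_trans (_ : \sum_a pi h q a * (rb / (1 - gamma)) <= _).
  apply: ler_sum => a _; rewrite ler_wpM2l ?pi0 //.
  apply: le_trans (_ : rb + gamma * (rb / (1 - gamma)) <= _).
    apply: lerD; first exact: r_le_rb.
    rewrite ler_wpM2l // (_ : rb / (1 - gamma) = \sum_q' T q a q' * (rb / (1 - gamma))); last first.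
      by rewrite -mulr_suml hT1 mul1r.
    by apply: ler_sum => q' _; rewrite ler_wpM2l.
  rewrite le_eqVlt; apply/orP; left; apply/eqP; field.
  by rewrite lt0r_neq0.
by rewrite -mulr_suml (hpi h q).2 mul1r.
Qed.

Lemma hv_cvg q : cvgn (fun n => hv n [::] q).
Proof.
apply: nondecreasing_is_cvgn.
  by apply/nondecreasing_seqP => n; exact: hv_mono.
by exists (rb / (1 - gamma)) => _ [n _ <-]; exact: hv_bound.
Qed.

Lemma disc_le q c : (forall n, hv n [::] q <= c) -> disc_value T r gamma pi q <= c.
Proof. by move=> h; apply: limr_le; [exact: hv_cvg| exact: nearW]. Qed.

Lemma disc_ge0 q : 0 <= disc_value T r gamma pi q.
Proof. by apply: limr_ge; [exact: hv_cvg| apply: nearW => n; exact: hv_ge0]. Qed.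

Lemma disc_ge q c M : (forall n, c - gamma ^+ n * M <= hv n [::] q) ->
  c <= disc_value T r gamma pi q.
Proof.
move=> h.
have cf : c - gamma ^+ n * M @[n --> \oo] --> c.
  rewrite -[X in _ --> X]subr0; apply: cvgB; first exact: cvg_cst.
  rewrite -(mul0r M); apply: cvgMr_tmp; apply: cvg_expr.
  by rewrite ger0_norm //; case/andP: hgamma.
rewrite -(cvg_lim _ cf) //; apply: ler_lim; [by apply/cvg_ex; exists c| exact: hv_cvg|].
exact: nearW.
Qed.

End Hor.

Section Main.
Variables (R : realType) (S A : finType) (P : S -> A -> {ffun S -> R})
  (Rw : S -> A -> R) (gamma : R).
Hypothesis hP : forall s a, is_dist (P s a).
Hypothesis hgamma : 0 < gamma < 1.
Variable d : S -> S -> R.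
Hypothesis hd : nonneg d.
Hypothesis hfix : FK P Rw gamma d = d.

Let g0 : 0 <= gamma. Proof. by case/andP: hgamma => /ltW. Qed.
Let g1 : 0 < 1 - gamma. Proof. by case/andP: hgamma => _ h; rewrite subr_gt0. Qed.

Local Notation Q := (S * S)%type.
Local Notation r := (bisim_reward Rw gamma).

Lemma r0 q a : 0 <= r q a.
Proof. by rewrite /bisim_reward mulr_ge0 // ltW. Qed.

Lemma unc_kernel u : in_bisim_uncertainty P u ->
  (forall q a q', 0 <= u q a q') /\ (forall q a, \sum_q' u q a q' = 1).
Proof.
move=> hu; split.
  by move=> q a q'; case: (hu q a) => h _; exact: h.
by move=> q a; exact: (coupling_sum1 (hP q.1 a) (hu q a)).
Qed.

Lemma unc_ne : exists u, in_bisim_uncertainty P u.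
Proof.
exists (fun q a => [ffun p : Q => P q.1 a p.1 * P q.2 a p.2]) => q a.
exact: coupling_exists.
Qed.

Lemma disc_ge0' u (pi : policy R Q A) q : is_policy pi -> in_bisim_uncertainty P u ->
  0 <= disc_value u r gamma pi q.
Proof.
move=> hpi hu; have [h0 h1] := unc_kernel hu.
exact: disc_ge0 h0 h1 hpi r0 hgamma q.
Qed.

Lemma term_le_d x y a : term P Rw gamma d x y a <= d x y.
Proof. by have := term_le_FK P Rw gamma d x y a; rewrite hfix. Qed.

Lemma robust_le (pi : policy R Q A) q : is_policy pi ->
  bisim_robust_value P Rw gamma pi q <= d q.1 q.2.
Proof.
move=> hpi; apply/ler_addgt0Pr => c hc.
have he : 0 < c * (1 - gamma) by rewrite mulr_gt0.
have : forall qa : Q * A, exists lam, is_coupling (P qa.1.1 qa.2) (P qa.1.2 qa.2) lam /\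
   coupling_cost d lam < kantorovich d (P qa.1.1 qa.2) (P qa.1.2 qa.2) + c * (1 - gamma).
  by move=> qa; apply: K_approx.
move=> /choice [f hf].
pose u q a := f (q, a).
have hu : in_bisim_uncertainty P u by move=> q' a; exact: (hf (q', a)).1.
have [hu0 hu1] := unc_kernel hu.
have key : forall n h q', horizon_value u r gamma pi n h q' <= d q'.1 q'.2 + c.
  elim => [|n IH] h q'; first by rewrite /= addr_ge0 // ltW.
  rewrite hvS; apply: le_trans (_ : \sum_a pi h q' a * (d q'.1 q'.2 + c) <= _); last first.
    by rewrite -mulr_suml (hpi h q').2 mul1r.
  apply: ler_sum => a _; rewrite ler_wpM2l ?(pi0 hpi) //.
  have h1 : \sum_q'' u q' a q'' * horizon_value u r gamma pi n (rcons h (q', a)) q''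
      <= coupling_cost d (u q' a) + c.
    rewrite /coupling_cost -[X in _ <= _ + X]mul1r -(hu1 q' a) mulr_suml -big_split /=.
    by apply: ler_sum => p _; rewrite -mulrDr ler_wpM2l //; exact: IH.
  have h2 := (hf (q', a)).2; rewrite -/(u q' a) in h2.
  have h3 := term_le_d q'.1 q'.2 a; rewrite /term in h3.
  rewrite /bisim_reward.
  set X := \sum_q'' _ in h1 *.
  set Y := coupling_cost d (u q' a) in h1 h2.
  set Kk := kantorovich _ _ _ in h2 h3.
  set rr := (1 - gamma) * _ in h3 *.
  case/andP: hgamma => ga gb.
  nra.
apply: (@le_trans _ _ (disc_value u r gamma pi q)).
  apply: ge_inf; last by exists u.
  by exists 0 => v [u' [hu' ->]]; exact: disc_ge0'.
by apply: (disc_le hu0 hu1 hpi r0 hgamma) => n; exact: key.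
Qed.

Lemma Vstar_le q : bisim_opt_robust_value P Rw gamma q <= d q.1 q.2.
Proof.
rewrite /bisim_opt_robust_value.
set E := [set v | _].
have [ne|e0] := pselect (E !=set0).
  by apply: ge_sup => // v [pi [hpi ->]]; exact: robust_le.
rewrite (_ : E = set0) ?sup0 ?hd //.
apply/funext => v; apply/propext; split => // hv; apply: e0; by exists v.
Qed.

Lemma Vstar_ge q : d q.1 q.2 <= bisim_opt_robust_value P Rw gamma q.
Proof.
rewrite /bisim_opt_robust_value.
set E := [set v | _].
case: (pickP (fun _ : A => true)) => [a1 _ | hA]; last first.
  have -> : d q.1 q.2 = 0.
    rewrite -hfix FKE; apply: (big_rec (fun x => x = 0)) => // a x _ _; by have := hA a.
  rewrite (_ : E = set0) ?sup0 //.
  apply/funext => v; apply/propext; split => // -[pi [hpi _]].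
  have := (hpi [::] q).2; rewrite big1 // => [/eqP|a]; first by rewrite eq_sym oner_eq0.
  by have := hA a.
pose a0 (q : Q) := [arg max_(i > a1) term P Rw gamma d q.1 q.2 i]%O.
have ha0 q' : d q'.1 q'.2 = term P Rw gamma d q'.1 q'.2 (a0 q').
  rewrite -{1}hfix FKE (bigmax_eq_arg _ a1) // => i _; exact: term_ge0.
pose pi : policy R Q A := fun h q => [ffun a => (a == a0 q)%:R].
have hpi : is_policy pi.
  move=> h q'; split; first by move=> a; rewrite ffunE ler0n.
  rewrite (bigD1 (a0 q')) //= ffunE eqxx big1 ?addr0 // => a ha.
  by rewrite ffunE (negbTE ha).
have piS h' q'' (F : A -> R) : \sum_a pi h' q'' a * F a = F (a0 q'').
  rewrite (bigD1 (a0 q'')) //= /pi ffunE eqxx mul1r big1 ?addr0 // => a ha.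
  by rewrite ffunE (negbTE ha) mul0r.
apply: (@le_trans _ _ (bisim_robust_value P Rw gamma pi q)); last first.
  apply: ub_le_sup; last by exists pi.
  by exists (d q.1 q.2) => v [pi' [hpi' ->]]; exact: robust_le.
apply: lb_le_inf.
  by have [u hu] := unc_ne; eexists; exists u.
move=> v [u [hu ->]].
have [hu0 hu1] := unc_kernel hu.
pose M := \sum_(q' : Q) d q'.1 q'.2.
have hM q' : d q'.1 q'.2 <= M by apply: (@single_le_sum R Q (fun q => d q.1 q.2)) => i; exact: hd.
apply: (disc_ge hu0 hu1 hpi r0 hgamma (M := M)) => n.
clear E; move: n [::] q; elim=> [|n IH] h q'.
  by rewrite expr0 mul1r /= subr_le0.
rewrite hvS piS.
have h1 : coupling_cost d (u q' (a0 q')) - gamma ^+ n * M <=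
    \sum_q'' u q' (a0 q') q'' * horizon_value u r gamma pi n (rcons h (q', a0 q')) q''.
  rewrite /coupling_cost -[X in _ - X <= _]mul1r -(hu1 q' (a0 q')) mulr_suml -sumrB.
  by apply: ler_sum => p _; rewrite -mulrBr ler_wpM2l //; exact: IH.
have h2 := K_le_cost hd (hu q' (a0 q')).
have h3 := ha0 q'; rewrite /term in h3.
rewrite /bisim_reward h3 exprS.
set X := \sum_q'' _ in h1 *.
set Y := coupling_cost d _ in h1 h2.
set Kk := kantorovich _ _ _ in h2 h3 *.
set G := gamma ^+ n in h1 *.
set rr := (1 - gamma) * _.
have gg := g0.
nra.
Qed.

Lemma VeqD q : bisim_opt_robust_value P Rw gamma q = d q.1 q.2.
Proof. by apply/le_anti; rewrite Vstar_le Vstar_ge. Qed.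

End Main.

Theorem theorem19 (R : realType) (S A : finType)
    (P : S -> A -> {ffun S -> R}) (Rw : S -> A -> R) (s_init : S) (gamma : R)
    (s1 s2 : S)
    (hP : forall s a, is_dist (P s a))
    (hgamma : 0 < gamma < 1) :
  let Vstar := bisim_opt_robust_value P Rw gamma in
  is_bisim_metric P Rw gamma (fun x y => Vstar (x, y)) /\
  (forall d, is_bisim_metric P Rw gamma d ->
     (forall x y, Vstar (x, y) = d x y) /\ Vstar (s1, s2) = d s1 s2).
Proof.
move=> Vstar; rewrite /Vstar.
pose ds := dstar P Rw gamma.
have hpm : is_pseudometric ds := dstar_pm P Rw gamma.
have hfx : FK P Rw gamma ds = ds := dstar_fix Rw hP hgamma.
have hV x y : bisim_opt_robust_value P Rw gamma (x, y) = ds x y.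
  exact: (VeqD hP hgamma hpm.1 hfx (x, y)).
have eqV : (fun x y => bisim_opt_robust_value P Rw gamma (x, y)) = ds.
  by apply/funext => x; apply/funext => y; exact: hV.
split.
  rewrite eqV; split; [exact: hpm | split; [exact: hfx|]].
  move=> d' hd' hf' x y.
  by rewrite -hV (VeqD hP hgamma hd'.1 hf' (x, y)).
move=> d [hdpm [hdfix _]].
have h x y : bisim_opt_robust_value P Rw gamma (x, y) = d x y.
  exact: (VeqD hP hgamma hdpm.1 hdfix (x, y)).
by split; [exact: h | exact: h].
Qed.
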